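(* Consider the linear Gaussian pairwise Markov model $$\alpha_{k+1}=T\alpha_k+By_{k-1}+\eta_k,\qquad y_k=Z\alpha_k+\beta y_{k-1}+\varepsilon_k,\qquad \begin{bmatrix}\eta_k\\ \varepsilon_k\end{bmatrix}\sim\mathcal N\!\left(0,\begin{bmatrix}Q&S\\ S^\top&H\end{bmatrix}\right),$$ $\alpha_0\sim\mathcal N(\bar\alpha_0,\Pi_0)$, $\Pi_0>0$, $H>0$, where $T,B,Z,\beta,Q,S,H,\bar\alpha_0,\Pi_0$ depend differentiably on $\theta\in\mathbb R^p$ while the observations $y_k$ (including the given initial values used below) do not depend on $\theta$. Write $\partial_iA:=\partial A/\partial\theta_i$, $\overline T=T-SH^{-1}Z$, $\overline B=B-SH^{-1}\beta$, $\overline Q=Q-SH^{-1}S^\top$. Algorithm 2a (UD-based pairwise Kalman filter): factor $\Pi_0=\bar U_{\Pi_0}D_{\Pi_0}\bar U_{\Pi_0}^\top$, $H=\bar U_HD_H\bar U_H^\top$, $\overline Q=\bar U_{\overline Q}D_{\overline Q}\bar U_{\overline Q}^\top$; set $\hat\alpha_{0|0}=\bar\alpha_0$, $\bar U_{P_{0|0}}=\bar U_{\Pi_0}$, $D_{P_{0|0}}=D_{\Pi_0}$; for $k=0,\dots,N-1$: $\hat\alpha_{k+1|k}=\overline T\hat\alpha_{k|k}+\overline By_{k-1}+SH^{-1}y_k$; MWGS on $\mathbb A^\top=[\overline T\bar U_{P_{k|k}}\ \bar U_{\overline Q}]$, $\mathbb D_A=D_{P_{k|k}}\oplus D_{\overline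 Q}$ gives $\mathbb R=\bar U_{P_{k+1|k}}$, $\mathbb D_R=D_{P_{k+1|k}}$; MWGS on $\mathbb A^\top=\begin{bmatrix}\bar U_{P_{k+1|k}}&0\\ Z\bar U_{P_{k+1|k}}&\bar U_H\end{bmatrix}$, $\mathbb D_A=D_{P_{k+1|k}}\oplus D_H$ gives $\mathbb R=\begin{bmatrix}\bar U_{P_{k+1|k+1}}&\bar K_{k+1}^u\\0&\bar U_{R_{e,k+1}}\end{bmatrix}$, $\mathbb D_R=D_{P_{k+1|k+1}}\oplus D_{R_{e,k+1}}$; $e_{k+1}=y_{k+1}-Z\hat\alpha_{k+1|k}-\beta y_k$, $\bar e_{k+1}=\bar U_{R_{e,k+1}}^{-1}e_{k+1}$, $\hat\alpha_{k+1|k+1}=\hat\alpha_{k+1|k}+\bar K_{k+1}^u\bar e_{k+1}$. Algorithm 2b (differentiated UD-based pairwise Kalman filter): for each $i=1,\dots,p$, in addition to Algorithm 2a, it initializes $\partial_i\bar U_{P_{0|0}}=\partial_i\bar U_{\Pi_0}$, $\partial_iD_{P_{0|0}}=\partial_iD_{\Pi_0}$, $\partial_i\hat\alpha_{0|0}=\partial_i\bar\alpha_0$ (using $\partial_i\overline T,\partial_i\overline B,\partial_i\overline Q$ and derivatives of the factors of $\overline Q$, $H$), and for $k=0,\dots,N-1$ computes: (a) $\partial_i\hat\alpha_{k+1|k}=(\partial_i\overline T)\hat\alpha_{k|k}+\overline T\,\partial_i\hat\alpha_{k|k}+(\partial_i\overline B)y_{k-1}+(\partial_iS)H^{-1}y_k-SH^{-1}(\partial_iH)H^{-1}y_k$;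 (b) in both MWGS steps, forms the pre-arrays of Algorithm 2a and their derivatives $\partial_i\mathbb A,\partial_i\mathbb D_A$, applies the Diff. UD scheme below, and reads off $\partial_i\bar U_{P_{k+1|k}},\partial_iD_{P_{k+1|k}},\partial_i\bar U_{P_{k+1|k+1}},\partial_iD_{P_{k+1|k+1}},\partial_i\bar U_{R_{e,k+1}},\partial_iD_{R_{e,k+1}},\partial_i\bar K_{k+1}^u$ from the positions of the corresponding undifferentiated blocks; (c) $\partial_i\bar e_{k+1}=-\bar U_{R_{e,k+1}}^{-1}(\partial_i\bar U_{R_{e,k+1}})\bar U_{R_{e,k+1}}^{-1}e_{k+1}-\bar U_{R_{e,k+1}}^{-1}\big[(\partial_iZ)\hat\alpha_{k+1|k}+Z\,\partial_i\hat\alpha_{k+1|k}+(\partial_i\beta)y_k\big]$; (d) $\partial_i\hat\alpha_{k+1|k+1}=\partial_i\hat\alpha_{k+1|k}+(\partial_i\bar K_{k+1}^u)\bar e_{k+1}+\bar K_{k+1}^u\,\partial_i\bar e_{k+1}$. Diff. UD scheme with inputs $\mathbb A,\mathbb D_A,\partial_i\mathbb A,\partial_i\mathbb D_A$: apply MWGS to get $\mathfrak W,\mathbb R,\mathbb D_R$; $M_0=\mathfrak W^\top\mathbb D_A(\partial_i\mathbb A)\mathbb R^{-\top}=\bar L_0+D_0+\bar U_0$ and $M_2=\mathfrak W^\top(\partial_i\mathbb D_A)\mathfrak W=\bar L_2+D_2+\bar U_2$ (strictly lower, diagonal, strictly upper parts); output $\partial_i\mathbb R=\mathbb R(\bar L_0^\top+\bar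 U_0+\bar U_2)\mathbb D_R^{-1}$, $\partial_i\mathbb D_R=2D_0+D_2$. Then Algorithm 2b computes the filter sensitivities of Algorithm 2a correctly: for every $k$ and $i$, the quantities it produces as $\partial_i\hat\alpha_{k+1|k}$, $\partial_i\bar U_{P_{k+1|k}}$, $\partial_iD_{P_{k+1|k}}$, $\partial_i\bar U_{P_{k+1|k+1}}$, $\partial_iD_{P_{k+1|k+1}}$, $\partial_i\bar U_{R_{e,k+1}}$, $\partial_iD_{R_{e,k+1}}$, $\partial_i\bar K_{k+1}^u$, $\partial_i\bar e_{k+1}$, $\partial_i\hat\alpha_{k+1|k+1}$ equal the partial derivatives with respect to $\theta_i$ of the corresponding quantities of Algorithm 2a, regarded as functions of $\theta$.
   Context: $UDU^\top$ factorization: $P=\bar U_PD_P\bar U_P^\top$ with $\bar U_P$ unit upper triangular and $D_P$ diagonal. $A\oplus B:=\mathrm{diag}\{A,B\}$. MWGS: given $\mathbb A\in\mathbb R^{r\times s}$ ($r\ge s$) and diagonal $\mathbb D_A>0$, it returns $\mathfrak W\in\mathbb R^{r\times s}$, a unit upper triangular $\mathbb R\in\mathbb R^{s\times s}$ and a diagonal $\mathbb D_R$ with $\mathbb A^\top=\mathbb R\mathfrak W^\top$ and $\mathfrak W^\top\mathbb D_A\mathfrak W=\mathbb D_R$. It is assumed that every MWGS call is well defined (with $\mathbb D_R$ invertible) and that all quantities are differentiable in $\theta$. *)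

(* Defs.v *)
From HB Require Import structures.
From mathcomp Require Import all_boot all_order all_algebra.
From mathcomp Require Import all_classical all_reals all_analysis.
Set Implicit Arguments.
Unset Strict Implicit.
Unset Printing Implicit Defensive.
Import Order.TTheory GRing.Theory Num.Theory.
Import numFieldNormedType.Exports.
Local Open Scope ring_scope.

Definition unit_upper (R : pzRingType) (n : nat) (U : 'M[R]_n) : Prop :=
  (forall i : 'I_n, U i i = 1) /\ (forall i j : 'I_n, (j < i)%N -> U i j = 0).

Definition diagonal (R : pzRingType) (n : nat) (D : 'M[R]_n) : Prop :=
  forall i j : 'I_n, i != j -> D i j = 0.

Definition posdiag (R : numDomainType) (n : nat) (D : 'M[R]_n) : Prop :=
  diagonal D /\ forall i : 'I_n, 0 < D i i.

Definition posdef (R : numDomainType) (n : nat) (P : 'M[R]_n) : Prop :=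
  P^T = P /\ forall v : 'cV[R]_n, v != 0 -> 0 < (v^T *m P *m v) 0 0.

Definition psd (R : numDomainType) (n : nat) (P : 'M[R]_n) : Prop :=
  P^T = P /\ forall v : 'cV[R]_n, 0 <= (v^T *m P *m v) 0 0.

Definition UDU (R : numDomainType) (n : nat) (U D P : 'M[R]_n) : Prop :=
  unit_upper U /\ posdiag D /\ P = U *m D *m U^T.

Definition slower (R : pzRingType) (n : nat) (M : 'M[R]_n) : 'M[R]_n :=
  \matrix_(i, j) (if (j < i)%N then M i j else 0).
Definition dpart (R : pzRingType) (n : nat) (M : 'M[R]_n) : 'M[R]_n :=
  \matrix_(i, j) (if i == j then M i j else 0).
Definition supper (R : pzRingType) (n : nat) (M : 'M[R]_n) : 'M[R]_n :=
  \matrix_(i, j) (if (i < j)%N then M i j else 0).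

Definition mwgs_fun (R : pzRingType) : Type :=
  forall r s : nat, 'M[R]_(r, s) -> 'M[R]_r -> 'M[R]_(r, s) * 'M[R]_s * 'M[R]_s.

(* Specification of MWGS: for A (r x s) and diagonal D_A > 0, whenever the call
   is well defined (A of full column rank s, which forces r >= s), it returns W,
   a unit upper triangular R and a diagonal invertible D_R with
   A^T = R W^T and W^T D_A W = D_R. *)
Definition MWGS_spec (R : realFieldType) (mwgs : mwgs_fun R) : Prop :=
  forall (r s : nat) (A : 'M[R]_(r, s)) (DA : 'M[R]_r),
    posdiag DA -> \rank A = s ->
    let: (W, Rm, DR) := mwgs r s A DA in
    [/\ A^T = Rm *m W^T, unit_upper Rm, W^T *m DA *m W = DR,
        diagonal DR & DR \in unitmx].

Definition diffUD (R : realFieldType) (mwgs : mwgs_fun R) (r s : nat)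
    (A : 'M[R]_(r, s)) (DA : 'M[R]_r) (dA : 'M[R]_(r, s)) (dDA : 'M[R]_r)
    : 'M[R]_s * 'M[R]_s :=
  let: (W, Rm, DR) := mwgs r s A DA in
  let M0 := W^T *m DA *m dA *m (invmx Rm)^T in
  let M2 := W^T *m dDA *m W in
  (Rm *m ((slower M0)^T + supper M0 + supper M2) *m invmx DR,
   (dpart M0) *+ 2 + dpart M2).

(* Model data at a fixed parameter value (or their partial derivatives) *)

Record params (R : pzRingType) (n m : nat) := Params {
  pT : 'M[R]_n;  pB : 'M[R]_(n, m);  pZ : 'M[R]_(m, n);  pbeta : 'M[R]_m;
  pS : 'M[R]_(n, m);  pH : 'M[R]_m;  palpha0 : 'cV[R]_n;
  pUPi0 : 'M[R]_n;  pDPi0 : 'M[R]_n;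
  pUH : 'M[R]_m;  pDH : 'M[R]_m;
  pUQ : 'M[R]_n;  pDQ : 'M[R]_n          (* Qbar = UQ DQ UQ^T *)
}.

Record step_out (R : pzRingType) (n m : nat) := StepOut {
  a_pred : 'cV[R]_n;
  W1 : 'M[R]_(n + n, n);
  U_pred : 'M[R]_n;
  D_pred : 'M[R]_n;
  W2 : 'M[R]_(n + m, n + m);
  U_filt : 'M[R]_n;
  D_filt : 'M[R]_n;
  K_u : 'M[R]_(n, m);
  U_Re : 'M[R]_m;
  D_Re : 'M[R]_m;
  e_inn : 'cV[R]_m;
  ebar : 'cV[R]_m;
  a_filt : 'cV[R]_n
}.

(* The observations: y : int -> 'cV_m, y j = y_j (j = -1, 0, 1, ...). *)

Definition alg2a_step (R : realFieldType) (n m : nat) (mwgs : mwgs_fun R)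
    (P : params R n m) (y : int -> 'cV[R]_m) (k : nat)
    (st : 'cV[R]_n * 'M[R]_n * 'M[R]_n) : step_out R n m :=
  let: (a, U, D) := st in
  let Hinv := invmx (pH P) in
  let Tb := pT P - pS P *m Hinv *m pZ P in
  let Bb := pB P - pS P *m Hinv *m pbeta P in
  let ap := Tb *m a + Bb *m y (Posz k - 1) + pS P *m Hinv *m y (Posz k) in
  let A1 := (row_mx (Tb *m U) (pUQ P))^T in
  let DA1 := block_mx D 0 0 (pDQ P) in
  let: (W1', Up, Dp) := mwgs (n + n)%N n A1 DA1 in
  let A2 := (block_mx Up 0 (pZ P *m Up) (pUH P))^T in
  let DA2 := block_mx Dp 0 0 (pDH P) in
  let: (W2', R2, DR2) := mwgs (n + m)%N (n + m)%N A2 DA2 in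
  let Uf := ulsubmx R2 in let K := ursubmx R2 in let URe := drsubmx R2 in
  let Df := ulsubmx DR2 in let DRe := drsubmx DR2 in
  let e := y (Posz k.+1) - pZ P *m ap - pbeta P *m y (Posz k) in
  let eb := invmx URe *m e in
  StepOut ap W1' Up Dp W2' Uf Df K URe DRe e eb (ap + K *m eb).

Fixpoint alg2a_state (R : realFieldType) (n m : nat) (mwgs : mwgs_fun R)
    (P : params R n m) (y : int -> 'cV[R]_m) (k : nat)
    : 'cV[R]_n * 'M[R]_n * 'M[R]_n :=
  match k with
  | 0 => (palpha0 P, pUPi0 P, pDPi0 P)
  | k'.+1 => let so := alg2a_step mwgs P y k' (alg2a_state mwgs P y k') in
             (a_filt so, U_filt so, D_filt so)
  end.

(* Quantities computed by Algorithm 2a at step k (time index k+1) *)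
Definition alg2a (R : realFieldType) (n m : nat) (mwgs : mwgs_fun R)
    (P : params R n m) (y : int -> 'cV[R]_m) (k : nat) : step_out R n m :=
  alg2a_step mwgs P y k (alg2a_state mwgs P y k).

Record dstep_out (R : pzRingType) (n m : nat) := DStepOut {
  d_a_pred : 'cV[R]_n;  d_U_pred : 'M[R]_n;  d_D_pred : 'M[R]_n;
  d_U_filt : 'M[R]_n;  d_D_filt : 'M[R]_n;
  d_U_Re : 'M[R]_m;  d_D_Re : 'M[R]_m;  d_K_u : 'M[R]_(n, m);
  d_ebar : 'cV[R]_m;  d_a_filt : 'cV[R]_n
}.

(* One step of Algorithm 2b for a fixed direction i; dP holds the partial
   derivatives d_i of the model data, (da, dU, dD) the sensitivities of the
   state at time k|k, st the state of Algorithm 2a at time k|k. *)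
Definition alg2b_step (R : realFieldType) (n m : nat) (mwgs : mwgs_fun R)
    (P dP : params R n m) (y : int -> 'cV[R]_m) (k : nat)
    (st dst : 'cV[R]_n * 'M[R]_n * 'M[R]_n) : dstep_out R n m :=
  let: (a, U, D) := st in
  let: (da, dU, dD) := dst in
  let so := alg2a_step mwgs P y k st in
  let Hinv := invmx (pH P) in
  let dHinv := - (Hinv *m pH dP *m Hinv) in
  let Tb := pT P - pS P *m Hinv *m pZ P in
  let dTb := pT dP - (pS dP *m Hinv *m pZ P + pS P *m dHinv *m pZ P
                      + pS P *m Hinv *m pZ dP) in
  let dBb := pB dP - (pS dP *m Hinv *m pbeta P + pS P *m dHinv *m pbeta P
                      + pS P *m Hinv *m pbeta dP) in
  let dap := dTb *m a + Tb *m da + dBb *m y (Posz k - 1)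
             + pS dP *m Hinv *m y (Posz k)
             - pS P *m Hinv *m pH dP *m Hinv *m y (Posz k) in
  let A1 := (row_mx (Tb *m U) (pUQ P))^T in
  let DA1 := block_mx D 0 0 (pDQ P) in
  let dA1 := (row_mx (dTb *m U + Tb *m dU) (pUQ dP))^T in
  let dDA1 := block_mx dD 0 0 (pDQ dP) in
  let: (dUp, dDp) := diffUD mwgs A1 DA1 dA1 dDA1 in
  let Up := U_pred so in let Dp := D_pred so in
  let A2 := (block_mx Up 0 (pZ P *m Up) (pUH P))^T in
  let DA2 := block_mx Dp 0 0 (pDH P) in
  let dA2 := (block_mx dUp 0 (pZ dP *m Up + pZ P *m dUp) (pUH dP))^T in
  let dDA2 := block_mx dDp 0 0 (pDH dP) in
  let: (dR2, dDR2) := diffUD mwgs A2 DA2 dA2 dDA2 in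
  let dUf := ulsubmx dR2 in let dK := ursubmx dR2 in let dURe := drsubmx dR2 in
  let dDf := ulsubmx dDR2 in let dDRe := drsubmx dDR2 in
  let UReinv := invmx (U_Re so) in
  let deb := - (UReinv *m dURe *m UReinv *m e_inn so)
             - UReinv *m (pZ dP *m a_pred so + pZ P *m dap
                          + pbeta dP *m y (Posz k)) in
  let daf := dap + dK *m ebar so + K_u so *m deb in
  DStepOut dap dUp dDp dUf dDf dURe dDRe dK deb daf.

Fixpoint alg2b_state (R : realFieldType) (n m : nat) (mwgs : mwgs_fun R)
    (P dP : params R n m) (y : int -> 'cV[R]_m) (k : nat)
    : 'cV[R]_n * 'M[R]_n * 'M[R]_n :=
  match k with
  | 0 => (palpha0 dP, pUPi0 dP, pDPi0 dP)
  | k'.+1 => let ds := alg2b_step mwgs P dP y k' (alg2a_state mwgs P y k')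
                                  (alg2b_state mwgs P dP y k') in
             (d_a_filt ds, d_U_filt ds, d_D_filt ds)
  end.

Definition alg2b (R : realFieldType) (n m : nat) (mwgs : mwgs_fun R)
    (P dP : params R n m) (y : int -> 'cV[R]_m) (k : nat) : dstep_out R n m :=
  alg2b_step mwgs P dP y k (alg2a_state mwgs P y k) (alg2b_state mwgs P dP y k).

Definition Qbar (R : realFieldType) (n m : nat)
    (Q : 'M[R]_n) (S : 'M[R]_(n, m)) (H : 'M[R]_m) : 'M[R]_n :=
  Q - S *m invmx H *m S^T.

Definition unitdir (R : pzRingType) (p : nat) (i : 'I_p) : 'rV[R]_p := delta_mx 0 i.

Definition params_at (R : realType) (n m p : nat)
    (T : 'rV[R]_p -> 'M[R]_n) (B : 'rV[R]_p -> 'M[R]_(n, m))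
    (Z : 'rV[R]_p -> 'M[R]_(m, n)) (beta : 'rV[R]_p -> 'M[R]_m)
    (S : 'rV[R]_p -> 'M[R]_(n, m)) (H : 'rV[R]_p -> 'M[R]_m)
    (alpha0 : 'rV[R]_p -> 'cV[R]_n)
    (UPi0 DPi0 : 'rV[R]_p -> 'M[R]_n) (UH DH : 'rV[R]_p -> 'M[R]_m)
    (UQ DQ : 'rV[R]_p -> 'M[R]_n) (th : 'rV[R]_p) : params R n m :=
  Params (T th) (B th) (Z th) (beta th) (S th) (H th) (alpha0 th)
         (UPi0 th) (DPi0 th) (UH th) (DH th) (UQ th) (DQ th).

Definition dparams_at (R : realType) (n m p : nat)
    (T : 'rV[R]_p -> 'M[R]_n) (B : 'rV[R]_p -> 'M[R]_(n, m))
    (Z : 'rV[R]_p -> 'M[R]_(m, n)) (beta : 'rV[R]_p -> 'M[R]_m)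
    (S : 'rV[R]_p -> 'M[R]_(n, m)) (H : 'rV[R]_p -> 'M[R]_m)
    (alpha0 : 'rV[R]_p -> 'cV[R]_n)
    (UPi0 DPi0 : 'rV[R]_p -> 'M[R]_n) (UH DH : 'rV[R]_p -> 'M[R]_m)
    (UQ DQ : 'rV[R]_p -> 'M[R]_n) (th : 'rV[R]_p) (i : 'I_p) : params R n m :=
  let e := unitdir R i in
  Params (derive T th e) (derive B th e) (derive Z th e) (derive beta th e)
         (derive S th e) (derive H th e) (derive alpha0 th e)
         (derive UPi0 th e) (derive DPi0 th e) (derive UH th e) (derive DH th e)
         (derive UQ th e) (derive DQ th e).

Definition alg2a_differentiable (R : realType) (n m p : nat) (mwgs : mwgs_fun R)
    (Pf : 'rV[R]_p -> params R n m) (y : int -> 'cV[R]_m) (N : nat) : Prop :=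
  forall (k : nat) (th : 'rV[R]_p), (k < N)%N ->
    let q := fun th' => alg2a mwgs (Pf th') y k in
    [/\ [/\ differentiable (fun th' => a_pred (q th')) th,
            differentiable (fun th' => W1 (q th')) th,
            differentiable (fun th' => U_pred (q th')) th
          & differentiable (fun th' => D_pred (q th')) th],
        [/\ differentiable (fun th' => W2 (q th')) th,
            differentiable (fun th' => U_filt (q th')) th,
            differentiable (fun th' => D_filt (q th')) th
          & differentiable (fun th' => K_u (q th')) th],
        [/\ differentiable (fun th' => U_Re (q th')) th,
            differentiable (fun th' => D_Re (q th')) th
          & differentiable (fun th' => e_inn (q th')) th]
      & [/\ differentiable (fun th' => ebar (q th')) th
          & differentiable (fun th' => a_filt (q th')) th]].

(* Main.v *)
Require Import Defs.
From HB Require Import structures.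
From mathcomp Require Import all_boot all_order all_algebra.
From mathcomp Require Import all_classical all_reals all_analysis.
From mathcomp Require Import fingroup perm.
Set Implicit Arguments.
Unset Strict Implicit.
Unset Printing Implicit Defensive.
Import Order.TTheory GRing.Theory Num.Theory.
Import numFieldNormedType.Exports.
Local Open Scope ring_scope.

Section Tool.
Local Open Scope classical_set_scope.
Variable R : realType.

Lemma cvg_sum_ord (T : Type) (F : set_system T) {FF : Filter F}
  (V : normedModType R) n (g : 'I_n -> T -> V) (l : 'I_n -> V) :
  (forall i, g i @ F --> l i) ->
  (fun t => \sum_(i < n) g i t) @ F --> \sum_(i < n) l i.
Proof.
elim: n g l => [|n IH] g l H.
  have -> : (fun t => \sum_(i < 0) g i t) = fun _ => 0.
    by apply/funext => t; rewrite big_ord0.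
  by rewrite big_ord0; exact: cvg_cst.
have -> : (fun t => \sum_(i < n.+1) g i t) =
   (fun t => \sum_(i < n) g (widen_ord (leqnSn n) i) t) + g ord_max.
  by apply/funext => t; rewrite big_ord_recr.
rewrite big_ord_recr; apply: cvgD => //.
exact: (IH (fun i => g (widen_ord (leqnSn n) i))).
Qed.

Lemma cvg_mx (T : Type) (F : set_system T) {FF : Filter F} a b
  (f : T -> 'M[R]_(a, b)) (L : 'M[R]_(a, b)) :
  (forall i j, (fun t => f t i j) @ F --> L i j) -> f @ F --> L.
Proof.
move=> H.
have -> : f = fun t => \sum_i \sum_j f t i j *: delta_mx i j.
  by apply/funext => t; rewrite -matrix_sum_delta.
rewrite [X in _ --> X](matrix_sum_delta L).
apply: cvg_sum_ord => i; apply: cvg_sum_ord => j.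
exact: cvgZr_tmp.
Qed.

Lemma cvg_mx_entry (T : Type) (F : set_system T) {FF : Filter F} a b
  (f : T -> 'M[R]_(a, b)) (L : 'M[R]_(a, b)) i j :
  f @ F --> L -> (fun t => f t i j) @ F --> L i j.
Proof.
move=> H.
exact: (continuous_cvg _ (@coord_continuous R a b i j L) H).
Qed.

Variable p : nat.
Implicit Types x v : 'rV[R]_p.

Lemma is_derive_cvg (W : normedModType R) (f : 'rV[R]_p -> W) x v l :
  (fun h : R => h^-1 *: ((f \o shift x) (h *: v) - f x)) @ 0^' --> l ->
  is_derive x v f l.
Proof. by move=> H; split; [exact: cvgP H | exact: cvg_lim H]. Qed.

Lemma is_derive_cvgE (W : normedModType R) (f : 'rV[R]_p -> W) x v l :
  is_derive x v f l ->
  (fun h : R => h^-1 *: ((f \o shift x) (h *: v) - f x)) @ 0^' --> l.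
Proof. by case=> d <-. Qed.

Lemma is_derive_mxP a b (f : 'rV[R]_p -> 'M[R]_(a, b)) x v df :
  is_derive x v f df <-> (forall i j, is_derive x v (fun t => f t i j) (df i j)).
Proof.
split=> [/is_derive_cvgE H i j|H].
  apply: is_derive_cvg.
  have -> : (fun h : R => h^-1 *: (((fun t => f t i j) \o shift x) (h *: v) - f x i j))
     = (fun h => (h^-1 *: ((f \o shift x) (h *: v) - f x)) i j).
    by apply/funext => h /=; rewrite !mxE.
  exact: cvg_mx_entry H.
apply: is_derive_cvg; apply: cvg_mx => i j.
have -> : (fun h : R => (h^-1 *: ((f \o shift x) (h *: v) - f x)) i j) =
  (fun h : R => h^-1 *: (((fun t => f t i j) \o shift x) (h *: v) - f x i j)).
  by apply/funext => h /=; rewrite !mxE.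
exact: is_derive_cvgE (H i j).
Qed.


Lemma is_derive_uniq (W : normedModType R) (f : 'rV[R]_p -> W) x v a b :
  is_derive x v f a -> is_derive x v f b -> a = b.
Proof. by move=> ha hb; rewrite -(@derive_val _ _ _ _ _ _ _ ha) (@derive_val _ _ _ _ _ _ _ hb). Qed.

Lemma is_deriveMs (a b : 'rV[R]_p -> R) x v da db :
  is_derive x v a da -> is_derive x v b db ->
  is_derive x v (fun t => a t * b t) (a x * db + b x * da).
Proof. by move=> ha hb; exact: (is_deriveM ha hb). Qed.

Lemma is_deriveDf (W : normedModType R) (f g : 'rV[R]_p -> W) x v df dg :
  is_derive x v f df -> is_derive x v g dg ->
  is_derive x v (fun t => f t + g t) (df + dg).
Proof. by move=> ha hb; exact: (is_deriveD ha hb). Qed.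

Lemma is_deriveNf (W : normedModType R) (f : 'rV[R]_p -> W) x v df :
  is_derive x v f df -> is_derive x v (fun t => - f t) (- df).
Proof. by move=> ha; exact: (is_deriveN ha). Qed.

Lemma is_deriveBf (W : normedModType R) (f g : 'rV[R]_p -> W) x v df dg :
  is_derive x v f df -> is_derive x v g dg ->
  is_derive x v (fun t => f t - g t) (df - dg).
Proof. by move=> ha hb; exact: (is_deriveB ha hb). Qed.

Lemma is_derive_cstf (W : normedModType R) (c : W) x v :
  is_derive x v (fun _ : 'rV[R]_p => c) 0.
Proof. exact: is_derive_cst. Qed.

Lemma is_derive_sumf (W : normedModType R) n (h : 'I_n -> 'rV[R]_p -> W) x v dh :
  (forall i, is_derive x v (h i) (dh i)) ->
  is_derive x v (fun t => \sum_(i < n) h i t) (\sum_(i < n) dh i).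
Proof. by move=> H; rewrite -fct_sumE; exact: is_derive_sum. Qed.

Lemma is_derive_mulmx a b c (f : 'rV[R]_p -> 'M[R]_(a, b)) (g : 'rV[R]_p -> 'M[R]_(b, c)) x v df dg :
  is_derive x v f df -> is_derive x v g dg ->
  is_derive x v (fun t => f t *m g t) (df *m g x + f x *m dg).
Proof.
move=> /is_derive_mxP hf /is_derive_mxP hg; apply/is_derive_mxP => i j.
have -> : (fun t => (f t *m g t) i j) = (fun t => \sum_k f t i k * g t k j).
  by apply/funext => t; rewrite !mxE.
rewrite !mxE.
have -> : \sum_j0 df i j0 * g x j0 j + \sum_j0 f x i j0 * dg j0 j =
   \sum_k (f x i k * dg k j + g x k j * df i k).
  by rewrite -big_split /=; apply: eq_bigr => k _; rewrite addrC [df _ _ * _]mulrC.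
by apply: is_derive_sumf => k; apply: is_deriveMs.
Qed.

Lemma is_derive_tr a b (f : 'rV[R]_p -> 'M[R]_(a, b)) x v df :
  is_derive x v f df -> is_derive x v (fun t => (f t)^T) df^T.
Proof.
move=> /is_derive_mxP hf; apply/is_derive_mxP => i j.
have -> : (fun t => (f t)^T i j) = (fun t => f t j i) by apply/funext => t; rewrite mxE.
by rewrite !mxE.
Qed.

Lemma is_derive_row_mx a b c (f : 'rV[R]_p -> 'M[R]_(a, b)) (g : 'rV[R]_p -> 'M[R]_(a, c)) x v df dg :
  is_derive x v f df -> is_derive x v g dg ->
  is_derive x v (fun t => row_mx (f t) (g t)) (row_mx df dg).
Proof.
move=> /is_derive_mxP hf /is_derive_mxP hg; apply/is_derive_mxP => i j.
case: (split_ordP j) => k ->.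
  have -> : (fun t => row_mx (f t) (g t) i (lshift c k)) = (fun t => f t i k).
    by apply/funext => t; rewrite row_mxEl.
  by rewrite row_mxEl.
have -> : (fun t => row_mx (f t) (g t) i (rshift b k)) = (fun t => g t i k).
  by apply/funext => t; rewrite row_mxEr.
by rewrite row_mxEr.
Qed.

Lemma is_derive_col_mx a b c (f : 'rV[R]_p -> 'M[R]_(a, c)) (g : 'rV[R]_p -> 'M[R]_(b, c)) x v df dg :
  is_derive x v f df -> is_derive x v g dg ->
  is_derive x v (fun t => col_mx (f t) (g t)) (col_mx df dg).
Proof.
move=> /is_derive_mxP hf /is_derive_mxP hg; apply/is_derive_mxP => i j.
case: (split_ordP i) => k ->.
  have -> : (fun t => col_mx (f t) (g t) (lshift b k) j) = (fun t => f t k j).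
    by apply/funext => t; rewrite col_mxEu.
  by rewrite col_mxEu.
have -> : (fun t => col_mx (f t) (g t) (rshift a k) j) = (fun t => g t k j).
  by apply/funext => t; rewrite col_mxEd.
by rewrite col_mxEd.
Qed.

Lemma is_derive_block_mx m1 m2 n1 n2 (f1 : 'rV[R]_p -> 'M[R]_(m1, n1))
  (f2 : 'rV[R]_p -> 'M[R]_(m1, n2)) (f3 : 'rV[R]_p -> 'M[R]_(m2, n1))
  (f4 : 'rV[R]_p -> 'M[R]_(m2, n2)) x v d1 d2 d3 d4 :
  is_derive x v f1 d1 -> is_derive x v f2 d2 -> is_derive x v f3 d3 ->
  is_derive x v f4 d4 ->
  is_derive x v (fun t => block_mx (f1 t) (f2 t) (f3 t) (f4 t)) (block_mx d1 d2 d3 d4).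
Proof.
move=> h1 h2 h3 h4.
by apply: is_derive_col_mx; apply: is_derive_row_mx.
Qed.

Lemma is_derive_ulsubmx m1 m2 n1 n2 (f : 'rV[R]_p -> 'M[R]_(m1 + m2, n1 + n2)) x v df :
  is_derive x v f df -> is_derive x v (fun t => ulsubmx (f t)) (ulsubmx df).
Proof.
move=> /is_derive_mxP hf; apply/is_derive_mxP => i j.
have -> : (fun t => ulsubmx (f t) i j) = (fun t => f t (lshift m2 i) (lshift n2 j)).
  by apply/funext => t; rewrite !mxE.
by rewrite !mxE.
Qed.

Lemma is_derive_ursubmx m1 m2 n1 n2 (f : 'rV[R]_p -> 'M[R]_(m1 + m2, n1 + n2)) x v df :
  is_derive x v f df -> is_derive x v (fun t => ursubmx (f t)) (ursubmx df).
Proof.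
move=> /is_derive_mxP hf; apply/is_derive_mxP => i j.
have -> : (fun t => ursubmx (f t) i j) = (fun t => f t (lshift m2 i) (rshift n1 j)).
  by apply/funext => t; rewrite !mxE.
by rewrite !mxE.
Qed.

Lemma is_derive_drsubmx m1 m2 n1 n2 (f : 'rV[R]_p -> 'M[R]_(m1 + m2, n1 + n2)) x v df :
  is_derive x v f df -> is_derive x v (fun t => drsubmx (f t)) (drsubmx df).
Proof.
move=> /is_derive_mxP hf; apply/is_derive_mxP => i j.
have -> : (fun t => drsubmx (f t) i j) = (fun t => f t (rshift m1 i) (rshift n1 j)).
  by apply/funext => t; rewrite !mxE.
by rewrite !mxE.
Qed.

Lemma derivable_big (I : Type) (r : seq I) (P : pred I) (h : I -> 'rV[R]_p -> R) x v :
  (forall i, derivable (h i) x v) ->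
  derivable (fun t => \sum_(i <- r | P i) h i t) x v /\
  derivable (fun t => \prod_(i <- r | P i) h i t) x v.
Proof.
move=> H; elim: r => [|a r [IHs IHp]].
  split.
    have -> : (fun t => \sum_(i <- [::] | P i) h i t) = cst 0.
      by apply/funext => t; rewrite big_nil.
    exact: derivable_cst.
  have -> : (fun t => \prod_(i <- [::] | P i) h i t) = cst 1.
    by apply/funext => t; rewrite big_nil.
  exact: derivable_cst.
case Pa: (P a).
  split.
    have -> : (fun t => \sum_(i <- a :: r | P i) h i t) =
      (h a + (fun t => \sum_(i <- r | P i) h i t)).
      by apply/funext => t; rewrite big_cons Pa.
    exact: derivableD.
  have -> : (fun t => \prod_(i <- a :: r | P i) h i t) =
    (h a * (fun t => \prod_(i <- r | P i) h i t)).
    by apply/funext => t; rewrite big_cons Pa.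
  exact: derivableM.
split.
  have -> : (fun t => \sum_(i <- a :: r | P i) h i t) =
    (fun t => \sum_(i <- r | P i) h i t).
    by apply/funext => t; rewrite big_cons Pa.
  exact: IHs.
have -> : (fun t => \prod_(i <- a :: r | P i) h i t) =
  (fun t => \prod_(i <- r | P i) h i t).
  by apply/funext => t; rewrite big_cons Pa.
exact: IHp.
Qed.

Lemma derivable_det n (f : 'rV[R]_p -> 'M[R]_n) x v :
  (forall i j, derivable (fun t => f t i j) x v) ->
  derivable (fun t => \det (f t)) x v.
Proof.
move=> H; rewrite /determinant.
apply: (derivable_big _ _ _).1 => s.
have -> : (fun t => (-1) ^+ odd_perm s * \prod_i f t i (s i)) =
   (cst ((-1) ^+ odd_perm s) * (fun t => \prod_i f t i (s i))) by [].
apply: derivableM; first exact: derivable_cst.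
by apply: (derivable_big _ _ _).2 => i; apply: H.
Qed.


Lemma is_derive_invmx n (f : 'rV[R]_p -> 'M[R]_n) x v df :
  (forall t, f t \in unitmx) -> is_derive x v f df ->
  is_derive x v (fun t => invmx (f t)) (- (invmx (f x) *m df *m invmx (f x))).
Proof.
move=> U hf.
have hent : forall i j, derivable (fun t => f t i j) x v.
  by move: (hf) => /is_derive_mxP H i j; case: (H i j).
have dinv : forall i j, derivable (fun t => invmx (f t) i j) x v.
  move=> i j.
  have -> : (fun t => invmx (f t) i j) = (fun t => (\det (f t))^-1) *
     (cst ((-1) ^+ (j + i)) * (fun t => \det (row' j (col' i (f t))))).
    by apply/funext => t; rewrite /invmx (U t) !mxE.
  apply: derivableM.
    apply: derivableV; last exact: derivable_det.
    by rewrite -unitfE -unitmxE U.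
  apply: derivableM; first exact: derivable_cst.
  apply: derivable_det => k l.
  have -> : (fun t => row' j (col' i (f t)) k l) = (fun t => f t (lift j k) (lift i l)).
    by apply/funext => t; rewrite !mxE.
  exact: hent.
have hD : is_derive x v (fun t => invmx (f t))
    (\matrix_(i, j) 'D_v (fun t => invmx (f t) i j) x).
  by apply/is_derive_mxP => i j; rewrite mxE; exact: derivableP.
set G := \matrix_(i, j) _ in hD.
have h1 := is_derive_mulmx hf hD.
have h0 : (fun t => f t *m invmx (f t)) = fun _ => 1%:M.
  by apply/funext => t; rewrite mulmxV.
rewrite h0 in h1.
have E := is_derive_uniq h1 (is_derive_cstf _ _ _).
apply: (is_derive_eq hD).
move/eqP: E; rewrite addrC addr_eq0 => /eqP E.
have -> : G = invmx (f x) *m (f x *m G) by rewrite mulmxA mulVmx ?mul1mx.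
by rewrite E mulmxN mulmxA.
Qed.

End Tool.

Section Alg.
Variable R : realFieldType.

Definition sup0 s (X : 'M[R]_s) := forall i j : 'I_s, (j <= i)%N -> X i j = 0.

Lemma diag_tr s (D : 'M[R]_s) : Defs.diagonal D -> D^T = D.
Proof.
move=> dD; apply/matrixP => i j; rewrite mxE.
case: (eqVneq i j) => [->//|nij]; rewrite !dD //; by rewrite eq_sym.
Qed.

Lemma unit_upper_unit s (U : 'M[R]_s) : unit_upper U -> U \in unitmx.
Proof.
case=> d1 d0; rewrite unitmxE -det_tr det_trig.
  by rewrite (eq_bigr (fun _ => 1)) ?prodr_const ?expr1n ?unitr1 // => i _; rewrite mxE d1.
by apply/is_trig_mxP => i j lij; rewrite mxE d0.
Qed.

Lemma sup0_solve s (U Y : 'M[R]_s) : unit_upper U -> sup0 (U *m Y) -> sup0 Y.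
Proof.
case=> d1 d0 h.
suff H : forall k (i j : 'I_s), (s - i <= k)%N -> (j <= i)%N -> Y i j = 0.
  by move=> i j; apply: (H s) => //; rewrite leq_subr.
elim=> [|k IH] i j hk hji.
  by move: hk; rewrite leqn0 subn_eq0 leqNgt ltn_ord.
have := h i j hji; rewrite mxE (bigD1 i) //= d1 mul1r big1 ?addr0 // => l nli.
case: (ltngtP l i) => [lli|ill|eli].
- by rewrite d0 ?mul0r.
- rewrite (IH l j) ?mulr0 //; last by apply: leq_trans hji (ltnW ill).
  by rewrite -ltnS (leq_trans _ hk) // ltn_sub2l // (leq_trans ill) // ltn_ord.
- by move: nli; rewrite (val_inj eli) eqxx.
Qed.

Lemma ud_extract s (M0 M2 X dDR : 'M[R]_s) :
  M0^T + M2 + M0 = X + dDR + X^T -> sup0 X -> Defs.diagonal dDR ->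
  X = (slower M0)^T + supper M0 + supper M2 /\ dDR = dpart M0 *+ 2 + dpart M2.
Proof.
move=> E hX hD.
have Eij : forall i j, M0 j i + M2 i j + M0 i j = X i j + dDR i j + X j i.
  by move=> i j; have := congr1 (fun M : 'M[R]_s => M i j) E; rewrite !mxE.
split; apply/matrixP => i j; rewrite !mxE ?mulr2n ?mxE.
  case: (ltngtP i j) => [lij|lji|eij].
  - have := Eij i j; rewrite (hX j i) ?(ltnW lij) // (hD i j); last by rewrite neq_ltn lij.
    by rewrite !addr0 => <-; rewrite addrAC.
  - by rewrite hX ?(ltnW lji) // !addr0.
  - by rewrite hX ?eij ?leqnn // !addr0.
case: (eqVneq i j) => [<-|nij]; last by rewrite hD // !addr0.
have := Eij i i; rewrite hX // addr0 add0r => <-.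
by rewrite addrAC.
Qed.


Lemma sup0_diag s (Y D : 'M[R]_s) : sup0 Y -> Defs.diagonal D -> sup0 (Y *m D).
Proof.
move=> hY hD i j hji; rewrite mxE big1 // => k _.
case: (eqVneq k j) => [->|nkj]; first by rewrite hY ?mul0r.
by rewrite hD ?mulr0.
Qed.

Lemma diffUD_point (mwgs : mwgs_fun R) r s (A dA : 'M[R]_(r, s)) (DA dDA : 'M[R]_r)
  (W : 'M[R]_(r, s)) (Rm DR dR dDR : 'M[R]_s) :
  mwgs r s A DA = (W, Rm, DR) ->
  A^T = Rm *m W^T -> unit_upper Rm -> W^T *m DA *m W = DR ->
  Defs.diagonal DR -> DR \in unitmx -> Defs.diagonal DA ->
  sup0 dR -> Defs.diagonal dDR ->
  dA^T *m DA *m A + A^T *m dDA *m A + A^T *m DA *m dA =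
    dR *m DR *m Rm^T + Rm *m dDR *m Rm^T + Rm *m DR *m dR^T ->
  diffUD mwgs A DA dA dDA = (dR, dDR).
Proof.
move=> Hm HA hU HW hDR uDR hDA hdR hdDR E.
rewrite /diffUD Hm.
have uR := unit_upper_unit hU.
set Ri := invmx Rm.
have WT : W^T = Ri *m A^T by rewrite HA mulmxA mulVmx // mul1mx.
have Wd : W = A *m Ri^T by rewrite -[W]trmxK WT trmx_mul trmxK.
have RRi : Rm^T *m Ri^T = 1%:M by rewrite -trmx_mul mulVmx // trmx1.
set M0 := W^T *m DA *m dA *m Ri^T.
set M2 := W^T *m dDA *m W.
set X := Ri *m dR *m DR.
have E' := congr1 (fun M => Ri *m M *m Ri^T) E; simpl in E'.
have L1 : Ri *m (dA^T *m DA *m A) *m Ri^T = M0^T.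
  rewrite /M0 !trmx_mul !trmxK (diag_tr hDA) Wd.
  by rewrite !mulmxA.
have L2 : Ri *m (A^T *m dDA *m A) *m Ri^T = M2.
  by rewrite /M2 Wd trmx_mul trmxK !mulmxA.
have L3 : Ri *m (A^T *m DA *m dA) *m Ri^T = M0.
  by rewrite /M0 WT !mulmxA.
have R1 : Ri *m (dR *m DR *m Rm^T) *m Ri^T = X.
  by rewrite /X -!mulmxA RRi mulmx1.
have R2 : Ri *m (Rm *m dDR *m Rm^T) *m Ri^T = dDR.
  by rewrite -!mulmxA RRi mulmx1 !mulmxA mulVmx // mul1mx.
have R3 : Ri *m (Rm *m DR *m dR^T) *m Ri^T = X^T.
  by rewrite /X !trmx_mul (diag_tr hDR) !mulmxA mulVmx // mul1mx.
rewrite !mulmxDr !mulmxDl L1 L2 L3 R1 R2 R3 in E'.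
have hX : sup0 X.
  apply: sup0_diag => //; apply: (sup0_solve hU).
  by rewrite mulmxA mulmxV // mul1mx.
have [EX ED] := ud_extract E' hX hdDR.
by rewrite -EX -ED /X !mulmxA mulmxV // mul1mx -mulmxA mulmxV // mulmx1.
Qed.


Lemma posdiag_unit s (D : 'M[R]_s) : posdiag D -> D \in unitmx.
Proof.
case=> hd hp; rewrite unitmxE det_trig; last first.
  by apply/is_trig_mxP => i j lij; rewrite hd // neq_ltn lij.
by rewrite unitfE gt_eqF // prodr_gt0.
Qed.

Lemma UDU_unit s (U D P : 'M[R]_s) : UDU U D P -> P \in unitmx.
Proof.
case=> hU [hD ->]; rewrite !unitmx_mul unitmx_tr unit_upper_unit //.
by rewrite posdiag_unit.
Qed.

Lemma posdiag_block s1 s2 (A : 'M[R]_s1) (B : 'M[R]_s2) :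
  posdiag A -> posdiag B -> posdiag (block_mx A 0 0 B).
Proof.
case=> dA pA [dB pB]; split.
  move=> i j nij.
  case: (split_ordP i) => i0 Ei; case: (split_ordP j) => j0 Ej; rewrite Ei Ej; rewrite ?block_mxEul ?block_mxEur ?block_mxEdl ?block_mxEdr ?mxE //.
    by apply: dA; apply: contra nij => /eqP E; rewrite Ei Ej E.
  by apply: dB; apply: contra nij => /eqP E; rewrite Ei Ej E.
move=> i; case: (split_ordP i) => i0 ->;
  by rewrite ?block_mxEul ?block_mxEdr.
Qed.

Lemma unit_upper_ul s1 s2 (U : 'M[R]_(s1 + s2)) : unit_upper U -> unit_upper (ulsubmx U).
Proof. by case=> h1 h0; split => [i|i j lji]; rewrite !mxE ?h1 ?h0. Qed.

Lemma unit_upper_dr s1 s2 (U : 'M[R]_(s1 + s2)) : unit_upper U -> unit_upper (drsubmx U).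
Proof.
case=> h1 h0; split => [i|i j lji]; rewrite !mxE ?h1 ?h0 //=.
by rewrite ltn_add2l.
Qed.

Lemma unit_upper_dl s1 s2 (U : 'M[R]_(s1 + s2)) : unit_upper U -> dlsubmx U = 0.
Proof.
case=> h1 h0; apply/matrixP => i j; rewrite !mxE h0 //=.
by rewrite (leq_trans (ltn_ord j)) // leq_addr.
Qed.

Lemma posdiag_ul s1 s2 (D : 'M[R]_(s1 + s2)) : posdiag D -> posdiag (ulsubmx D).
Proof.
case=> h1 h0; split => [i j nij|i]; rewrite !mxE ?h0 // h1 //.
Qed.

Lemma posdiag_dr s1 s2 (D : 'M[R]_(s1 + s2)) : posdiag D -> posdiag (drsubmx D).
Proof.
case=> h1 h0; split => [i j nij|i]; rewrite !mxE ?h0 // h1 //.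
by apply: contra nij => /eqP/rshift_inj ->.
Qed.

Lemma diag_blockK s1 s2 (D : 'M[R]_(s1 + s2)) : Defs.diagonal D ->
  D = block_mx (ulsubmx D) 0 0 (drsubmx D).
Proof.
move=> h; rewrite -{1}(submxK D); congr block_mx; apply/matrixP => i j;
  rewrite !mxE h //; apply/negP => /eqP/(congr1 val) /= E.
  by move: (ltn_ord i); rewrite E ltnNge leq_addr.
by move: (ltn_ord j); rewrite -E ltnNge leq_addr.
Qed.

Lemma upper_blockK s1 s2 (U : 'M[R]_(s1 + s2)) : unit_upper U ->
  U = block_mx (ulsubmx U) (ursubmx U) 0 (drsubmx U).
Proof. by move=> h; rewrite -{1}(submxK U) unit_upper_dl. Qed.

Lemma posdiag_gram r s (W : 'M[R]_(r, s)) (DA : 'M[R]_r) (DR : 'M[R]_s) :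
  posdiag DA -> Defs.diagonal DR -> DR \in unitmx -> W^T *m DA *m W = DR ->
  posdiag DR.
Proof.
move=> [hdA hpA] hdR uR E; split => // i.
have ge0 : 0 <= DR i i.
  rewrite -E mxE sumr_ge0 // => k _; rewrite mxE (bigD1 k) //= big1 ?addr0.
    by rewrite mxE mulrAC -expr2 mulr_ge0 ?sqr_ge0 // ltW.
  by move=> l nlk; rewrite hdA ?mulr0 ?mul0r // eq_sym.
rewrite lt_def ge0 andbT; apply/eqP => z.
have := congr1 (fun M : 'M[R]_s => M i i) (mulmxV uR).
rewrite !mxE eqxx (bigD1 i) //= z mul0r add0r big1 => [|j nji]; last by rewrite hdR ?mul0r // eq_sym.
by move/eqP; rewrite eq_sym oner_eq0.
Qed.

Lemma rank_A1 n (X U : 'M[R]_n) : unit_upper U -> \rank (row_mx X U)^T = n.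
Proof.
move=> hU; rewrite mxrank_tr; apply/eqP; rewrite eqn_leq rank_leq_row /=.
have E : row_mx X U *m col_mx 0 1%:M = U by rewrite mul_row_col mulmx0 add0r mulmx1.
apply: leq_trans (mxrankM_maxl _ (col_mx 0 1%:M)).
by rewrite E mxrank_unit // unit_upper_unit.
Qed.

Lemma rank_A2 n m (Up : 'M[R]_n) (Z : 'M[R]_(m, n)) (UH : 'M[R]_m) :
  unit_upper Up -> unit_upper UH -> \rank (block_mx Up 0 (Z *m Up) UH)^T = (n + m)%N.
Proof.
move=> h1 h2; rewrite mxrank_tr mxrank_unit // unitmxE det_lblock unitrM.
by rewrite -!unitmxE !unit_upper_unit.
Qed.

End Alg.

Section Step.
Variables (R : realFieldType) (n m : nat) (mwgs : mwgs_fun R) (y : int -> 'cV[R]_m).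

Definition Tbar (P : params R n m) := pT P - pS P *m invmx (pH P) *m pZ P.
Definition Bbar (P : params R n m) := pB P - pS P *m invmx (pH P) *m pbeta P.
Definition A1of (P : params R n m) (U : 'M[R]_n) := (row_mx (Tbar P *m U) (pUQ P))^T.
Definition DA1of (P : params R n m) (D : 'M[R]_n) := block_mx D 0 0 (pDQ P).
Definition A2of (P : params R n m) (Up : 'M[R]_n) := (block_mx Up 0 (pZ P *m Up) (pUH P))^T.
Definition DA2of (P : params R n m) (Dp : 'M[R]_n) := block_mx Dp 0 0 (pDH P).

Lemma stepE P k a U D :
  let so := alg2a_step mwgs P y k (a, U, D) in
  [/\ a_pred so = Tbar P *m a + Bbar P *m y (Posz k - 1) + pS P *m invmx (pH P) *m y (Posz k),
      mwgs (A1of P U) (DA1of P D) = (W1 so, U_pred so, D_pred so),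
      [/\ (mwgs (A2of P (U_pred so)) (DA2of P (D_pred so))).1.1 = W2 so,
          ulsubmx (mwgs (A2of P (U_pred so)) (DA2of P (D_pred so))).1.2 = U_filt so,
          ursubmx (mwgs (A2of P (U_pred so)) (DA2of P (D_pred so))).1.2 = K_u so,
          drsubmx (mwgs (A2of P (U_pred so)) (DA2of P (D_pred so))).1.2 = U_Re so &
          ulsubmx (mwgs (A2of P (U_pred so)) (DA2of P (D_pred so))).2 = D_filt so /\
          drsubmx (mwgs (A2of P (U_pred so)) (DA2of P (D_pred so))).2 = D_Re so],
      e_inn so = y (Posz k.+1) - pZ P *m a_pred so - pbeta P *m y (Posz k) &
      ebar so = invmx (U_Re so) *m e_inn so /\ a_filt so = a_pred so + K_u so *m ebar so].
Proof.
rewrite /alg2a_step /A1of /DA1of /A2of /DA2of /Tbar /Bbar /=.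
case: (mwgs _ _) => [[W1' Up] Dp] /=.
case E2: (mwgs _ _) => [[W2' R2] DR2] /=; rewrite ?E2 /=.
by split.
Qed.


Lemma step_inv P k a U D : MWGS_spec mwgs -> unit_upper U -> posdiag D ->
  unit_upper (pUQ P) -> posdiag (pDQ P) -> unit_upper (pUH P) -> posdiag (pDH P) ->
  let so := alg2a_step mwgs P y k (a, U, D) in
  [/\ posdiag (DA1of P D), \rank (A1of P U) = n, unit_upper (U_pred so),
      posdiag (D_pred so) &
   [/\ posdiag (DA2of P (D_pred so)), \rank (A2of P (U_pred so)) = (n + m)%N,
      (mwgs (A2of P (U_pred so)) (DA2of P (D_pred so))).1.2 =
          block_mx (U_filt so) (K_u so) 0 (U_Re so),
      (mwgs (A2of P (U_pred so)) (DA2of P (D_pred so))).2 =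
          block_mx (D_filt so) 0 0 (D_Re so) &
      [/\ unit_upper (U_filt so), posdiag (D_filt so) & unit_upper (U_Re so)]]].
Proof.
move=> spec hU hD hUQ hDQ hUH hDH so.
have [_ E1 [_ Ef EK ERe [EDf EDRe]] _ _] := stepE P k a U D.
rewrite -/so in E1 Ef EK ERe EDf EDRe.
have pA1 : posdiag (DA1of P D) by exact: posdiag_block.
have rA1 : \rank (A1of P U) = n by exact: rank_A1.
have := spec _ _ _ _ pA1 rA1; rewrite E1 => -[_ uUp hW hdDp uDp].
have pDp := posdiag_gram pA1 hdDp uDp hW.
have pA2 : posdiag (DA2of P (D_pred so)) by exact: posdiag_block.
have rA2 : \rank (A2of P (U_pred so)) = (n + m)%N by exact: rank_A2.
have := spec _ _ _ _ pA2 rA2.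
move: Ef EK ERe EDf EDRe.
case: (mwgs _ _) => [[W2' R2] DR2] /= Ef EK ERe EDf EDRe [_ uR2 hW2 hdR2 uR2'].
have pDR2 := posdiag_gram pA2 hdR2 uR2' hW2.
rewrite -Ef -EK -ERe -EDf -EDRe.
split => //; split.
- by [].
- by [].
- exact: upper_blockK.
- exact: diag_blockK.
- split; [exact: unit_upper_ul | exact: posdiag_ul | exact: unit_upper_dr].
Qed.


Lemma state_inv (P : params R n m) k : MWGS_spec mwgs -> unit_upper (pUPi0 P) -> posdiag (pDPi0 P) ->
  unit_upper (pUQ P) -> posdiag (pDQ P) -> unit_upper (pUH P) -> posdiag (pDH P) ->
  unit_upper (alg2a_state mwgs P y k).1.2 /\ posdiag (alg2a_state mwgs P y k).2.
Proof.
move=> spec h1 h2 h3 h4 h5 h6.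
elim: k => [|k [IH1 IH2]] //=.
move: IH1 IH2; case: (alg2a_state mwgs P y k) => [[a U] D] /= hU hD.
by have [_ _ _ _ [_ _ _ _ [? ? _]]] := step_inv (P:=P) k a spec hU hD h3 h4 h5 h6.
Qed.


Lemma dstepE (P dP : params R n m) k a U D da dU dD dUp dDp dR2 dDR2 :
  let so := alg2a_step mwgs P y k (a, U, D) in
  let Hinv := invmx (pH P) in
  let dHinv := - (Hinv *m pH dP *m Hinv) in
  let dTb := pT dP - (pS dP *m Hinv *m pZ P + pS P *m dHinv *m pZ P
                      + pS P *m Hinv *m pZ dP) in
  let dBb := pB dP - (pS dP *m Hinv *m pbeta P + pS P *m dHinv *m pbeta P
                      + pS P *m Hinv *m pbeta dP) in
  let dap := dTb *m a + Tbar P *m da + dBb *m y (Posz k - 1)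
             + pS dP *m Hinv *m y (Posz k)
             - pS P *m Hinv *m pH dP *m Hinv *m y (Posz k) in
  diffUD mwgs (A1of P U) (DA1of P D) (row_mx (dTb *m U + Tbar P *m dU) (pUQ dP))^T
     (block_mx dD 0 0 (pDQ dP)) = (dUp, dDp) ->
  diffUD mwgs (A2of P (U_pred so)) (DA2of P (D_pred so))
     (block_mx dUp 0 (pZ dP *m U_pred so + pZ P *m dUp) (pUH dP))^T
     (block_mx dDp 0 0 (pDH dP)) = (dR2, dDR2) ->
  let deb := - (invmx (U_Re so) *m drsubmx dR2 *m invmx (U_Re so) *m e_inn so)
             - invmx (U_Re so) *m (pZ dP *m a_pred so + pZ P *m dap
                          + pbeta dP *m y (Posz k)) in
  alg2b_step mwgs P dP y k (a, U, D) (da, dU, dD) =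
  DStepOut dap dUp dDp (ulsubmx dR2) (ulsubmx dDR2) (drsubmx dR2) (drsubmx dDR2)
    (ursubmx dR2) deb (dap + ursubmx dR2 *m ebar so + K_u so *m deb).
Proof.
move=> so Hinv dHinv dTb dBb dap E1 E2 deb.
rewrite /A1of /DA1of /A2of /DA2of /Tbar in E1 E2.
by rewrite /alg2b_step -/so E1 E2.
Qed.

End Step.

Section Gen.
Variables (R : realType) (p : nat).
Implicit Types x v : 'rV[R]_p.

Lemma dfun (W : normedModType R) (f : 'rV[R]_p -> W) x v :
  differentiable f x -> is_derive x v f ('D_v f x).
Proof. by move=> df; apply: derivableP; apply: diff_derivable. Qed.

Lemma const_entry a b (f : 'rV[R]_p -> 'M[R]_(a, b)) x v df i j c :
  (forall t, f t i j = c) -> is_derive x v f df -> df i j = 0.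
Proof.
move=> hc /is_derive_mxP /(_ i j) h.
have E : (fun t => f t i j) = (fun _ => c) by apply/funext => t; rewrite hc.
rewrite E in h.
exact: is_derive_uniq h (is_derive_cstf _ _ _).
Qed.

Lemma gram_id r s (A : 'M[R]_(r, s)) (DA : 'M[R]_r) (W : 'M[R]_(r, s)) (Rm DR : 'M[R]_s) :
  A^T = Rm *m W^T -> W^T *m DA *m W = DR -> A^T *m DA *m A = Rm *m DR *m Rm^T.
Proof.
move=> HA HW.
have Ae : A = W *m Rm^T by rewrite -[A]trmxK HA trmx_mul trmxK.
by rewrite Ae trmx_mul trmxK -HW !mulmxA.
Qed.

Lemma diffUD_correct (mwgs : mwgs_fun R) r s (A : 'rV[R]_p -> 'M[R]_(r, s))
  (DA : 'rV[R]_p -> 'M[R]_r) (dA : 'M[R]_(r, s)) (dDA : 'M[R]_r) (Rf DRf : 'rV[R]_p -> 'M[R]_s) (dR dDR : 'M[R]_s) x v :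
  MWGS_spec mwgs -> (forall t, posdiag (DA t)) -> (forall t, \rank (A t) = s) ->
  (forall t, (mwgs _ _ (A t) (DA t)).1.2 = Rf t) ->
  (forall t, (mwgs _ _ (A t) (DA t)).2 = DRf t) ->
  is_derive x v A dA -> is_derive x v DA dDA -> is_derive x v Rf dR ->
  is_derive x v DRf dDR ->
  diffUD mwgs (A x) (DA x) dA dDA = (dR, dDR).
Proof.
move=> spec hpos hrank hR hD hA hDA hRf hDRf.
have sp : forall t, [/\ unit_upper (Rf t), Defs.diagonal (DRf t) &
    (A t)^T *m DA t *m A t = Rf t *m DRf t *m (Rf t)^T].
  move=> t; have := spec _ _ (A t) (DA t) (hpos t) (hrank t).
  rewrite -hR -hD; case: (mwgs _ _ _ _) => [[W Rm] DR] /= [HA uR HW dDR0 _].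
  by split => //; apply: gram_id HA HW.
have E : (fun t => (A t)^T *m DA t *m A t) = (fun t => Rf t *m DRf t *m (Rf t)^T).
  by apply/funext => t; have [_ _ ->] := sp t.
have h1 := is_derive_mulmx (is_derive_mulmx (is_derive_tr hA) hDA) hA.
have h2 := is_derive_mulmx (is_derive_mulmx hRf hDRf) (is_derive_tr hRf).
rewrite E in h1; have Eq := is_derive_uniq h1 h2.
have sdR : sup0 dR.
  move=> i j; rewrite leq_eqVlt => /orP[/eqP eij|lji].
    have -> : j = i by apply: val_inj.
    by apply: (const_entry (c := 1)) hRf => t; have [[-> _] _ _] := sp t.
  by apply: (const_entry (c := 0)) hRf => t; have [[_ h0] _ _] := sp t; apply: h0.
have ddR : Defs.diagonal dDR.
  by move=> i j nij; apply: (const_entry (c := 0)) hDRf => t; have [_ h0 _] := sp t; apply: h0.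
have := spec _ _ (A x) (DA x) (hpos x) (hrank x).
move: (hR x) (hD x) (hpos x) => {E h1 h2}.
case E: (mwgs _ _ _ _) => [[W Rm] DR] /= eR eD [hdA _] [HA uR HW dDR' uDR].
apply: (diffUD_point E) => //.
rewrite -eR -eD in Eq.
by rewrite -!mulmxDl.
Qed.

End Gen.

Section Main.
Variables (R : realType) (n m p N : nat).
Variables (T : 'rV[R]_p -> 'M[R]_n) (B : 'rV[R]_p -> 'M[R]_(n, m))
    (Z : 'rV[R]_p -> 'M[R]_(m, n)) (beta : 'rV[R]_p -> 'M[R]_m)
    (Q : 'rV[R]_p -> 'M[R]_n) (S : 'rV[R]_p -> 'M[R]_(n, m))
    (H : 'rV[R]_p -> 'M[R]_m)
    (alpha0 : 'rV[R]_p -> 'cV[R]_n) (Pi0 : 'rV[R]_p -> 'M[R]_n)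
    (UPi0 DPi0 : 'rV[R]_p -> 'M[R]_n) (UH DH : 'rV[R]_p -> 'M[R]_m)
    (UQ DQ : 'rV[R]_p -> 'M[R]_n)
    (y : int -> 'cV[R]_m) (mwgs : mwgs_fun R).
Hypothesis spec : MWGS_spec mwgs.
Hypothesis hPi : forall th, UDU (UPi0 th) (DPi0 th) (Pi0 th).
Hypothesis hH : forall th, UDU (UH th) (DH th) (H th).
Hypothesis hQ : forall th, UDU (UQ th) (DQ th) (Qbar (Q th) (S th) (H th)).
Hypothesis dT : forall th, differentiable T th.
Hypothesis dB : forall th, differentiable B th.
Hypothesis dZ : forall th, differentiable Z th.
Hypothesis dbeta : forall th, differentiable beta th.
Hypothesis dS : forall th, differentiable S th.
Hypothesis dH : forall th, differentiable H th.
Hypothesis dalpha0 : forall th, differentiable alpha0 th.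
Hypothesis dUPi0 : forall th, differentiable UPi0 th.
Hypothesis dDPi0 : forall th, differentiable DPi0 th.
Hypothesis dUH : forall th, differentiable UH th.
Hypothesis dDH : forall th, differentiable DH th.
Hypothesis dUQ : forall th, differentiable UQ th.
Hypothesis dDQ : forall th, differentiable DQ th.

Local Notation Pf := (params_at T B Z beta S H alpha0 UPi0 DPi0 UH DH UQ DQ).
Local Notation dPf := (dparams_at T B Z beta S H alpha0 UPi0 DPi0 UH DH UQ DQ).

Variables (th : 'rV[R]_p) (i : 'I_p).
Local Notation e := (unitdir R i).

Lemma inv_state k t : unit_upper (alg2a_state mwgs (Pf t) y k).1.2 /\
   posdiag (alg2a_state mwgs (Pf t) y k).2.
Proof.
have [h1 [h2 _]] := hPi t; have [h3 [h4 _]] := hQ t; have [h5 [h6 _]] := hH t.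
exact: state_inv.
Qed.


Lemma step_main k :
  alg2a_differentiable mwgs Pf y N -> (k < N)%N ->
  is_derive th e (fun t => (alg2a_state mwgs (Pf t) y k).1.1)
     (alg2b_state mwgs (Pf th) (dPf th i) y k).1.1 ->
  is_derive th e (fun t => (alg2a_state mwgs (Pf t) y k).1.2)
     (alg2b_state mwgs (Pf th) (dPf th i) y k).1.2 ->
  is_derive th e (fun t => (alg2a_state mwgs (Pf t) y k).2)
     (alg2b_state mwgs (Pf th) (dPf th i) y k).2 ->
  let a := fun th' => alg2a mwgs (Pf th') y k in
  let d := alg2b mwgs (Pf th) (dPf th i) y k in
    [/\ is_derive th e (fun th' => a_pred (a th')) (d_a_pred d),
            is_derive th e (fun th' => U_pred (a th')) (d_U_pred d),
            is_derive th e (fun th' => D_pred (a th')) (d_D_pred d),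
            is_derive th e (fun th' => U_filt (a th')) (d_U_filt d)
          & is_derive th e (fun th' => D_filt (a th')) (d_D_filt d)] /\
        [/\ is_derive th e (fun th' => U_Re (a th')) (d_U_Re d),
            is_derive th e (fun th' => D_Re (a th')) (d_D_Re d),
            is_derive th e (fun th' => K_u (a th')) (d_K_u d),
            is_derive th e (fun th' => ebar (a th')) (d_ebar d)
          & is_derive th e (fun th' => a_filt (a th')) (d_a_filt d)].
Proof.
move=> hdiff hkN ha hU hD a d.
have [[_ _ dUp0 dDp0] [_ dUf0 dDf0 dK0] [dURe0 dDRe0 _] _] := hdiff k th hkN.
pose sa t := (alg2a_state mwgs (Pf t) y k).1.1.
pose sU t := (alg2a_state mwgs (Pf t) y k).1.2.
pose sD t := (alg2a_state mwgs (Pf t) y k).2.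
pose da := (alg2b_state mwgs (Pf th) (dPf th i) y k).1.1.
pose dU := (alg2b_state mwgs (Pf th) (dPf th i) y k).1.2.
pose dD := (alg2b_state mwgs (Pf th) (dPf th i) y k).2.
pose so t := alg2a_step mwgs (Pf t) y k (sa t, sU t, sD t).
have Ea1 : forall t, alg2a mwgs (Pf t) y k = so t.
  move=> t; rewrite /alg2a /so /sa /sU /sD.
  by case: (alg2a_state _ _ _ _) => [[? ?] ?].
have Ea : a = so by apply/funext => t; exact: Ea1.
have cv : forall (W : normedModType R) (F : step_out R n m -> W),
    differentiable (fun t => F (alg2a mwgs (Pf t) y k)) th ->
    differentiable (fun t => F (so t)) th.
  move=> W F; have -> // : (fun t => F (alg2a mwgs (Pf t) y k)) = (fun t => F (so t)).
  by apply/funext => t; rewrite Ea1.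
have {}dUp0 := cv _ (@U_pred _ _ _) dUp0.
have {}dDp0 := cv _ (@D_pred _ _ _) dDp0.
have {}dUf0 := cv _ (@U_filt _ _ _) dUf0.
have {}dDf0 := cv _ (@D_filt _ _ _) dDf0.
have {}dK0 := cv _ (@K_u _ _ _) dK0.
have {}dURe0 := cv _ (@U_Re _ _ _) dURe0.
have {}dDRe0 := cv _ (@D_Re _ _ _) dDRe0.
have Ed : d = alg2b_step mwgs (Pf th) (dPf th i) y k (sa th, sU th, sD th) (da, dU, dD).
  rewrite /d /alg2b /sa /sU /sD /da /dU /dD.
  case: (alg2a_state _ _ _ _) => [[? ?] ?].
  by case: (alg2b_state _ _ _ _ _) => [[? ?] ?].
rewrite Ea.
rewrite Ed => {Ed d Ea a cv}.
have inv t : unit_upper (sU t) /\ posdiag (sD t) := inv_state k t.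
have hQt t : unit_upper (UQ t) /\ posdiag (DQ t) by have [? [? _]] := hQ t.
have hHt t : unit_upper (UH t) /\ posdiag (DH t) by have [? [? _]] := hH t.
have SI t := @step_inv _ _ _ mwgs y (Pf t) k (sa t) (sU t) (sD t) spec (inv t).1 (inv t).2
   (hQt t).1 (hQt t).2 (hHt t).1 (hHt t).2.
have SE t := stepE mwgs y (Pf t) k (sa t) (sU t) (sD t).
rewrite -/(so _) in SI SE.
have iT := dfun e (dT th).
have iB := dfun e (dB th).
have iZ := dfun e (dZ th).
have ibeta := dfun e (dbeta th).
have iS := dfun e (dS th).
have iH := dfun e (dH th).
have iUH := dfun e (dUH th).
have iDH := dfun e (dDH th).
have iUQ := dfun e (dUQ th).
have iDQ := dfun e (dDQ th).
have iUp := dfun e dUp0.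
have iDp := dfun e dDp0.
have iUf := dfun e dUf0.
have iDf := dfun e dDf0.
have iK := dfun e dK0.
have iURe := dfun e dURe0.
have iDRe := dfun e dDRe0.
have iHinv := is_derive_invmx (fun t => UDU_unit (hH t)) iH.
set Hinv := invmx (H th) in iHinv.
set dHinv := - (Hinv *m _ *m Hinv) in iHinv.
have iTb : is_derive th e (fun t => Tbar (Pf t))
   ('D_e T th - ('D_e S th *m Hinv *m Z th + S th *m dHinv *m Z th
                      + S th *m Hinv *m 'D_e Z th)).
  apply: (is_derive_eq (is_deriveBf iT (is_derive_mulmx (is_derive_mulmx iS iHinv) iZ))).
  by rewrite mulmxDl.
have iBb : is_derive th e (fun t => Bbar (Pf t))
   ('D_e B th - ('D_e S th *m Hinv *m beta th + S th *m dHinv *m beta th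
                      + S th *m Hinv *m 'D_e beta th)).
  apply: (is_derive_eq (is_deriveBf iB (is_derive_mulmx (is_derive_mulmx iS iHinv) ibeta))).
  by rewrite mulmxDl.
have ia : is_derive th e (fun t => a_pred (so t))
   (('D_e T th - ('D_e S th *m Hinv *m Z th + S th *m dHinv *m Z th
                      + S th *m Hinv *m 'D_e Z th)) *m sa th + Tbar (Pf th) *m da
    + ('D_e B th - ('D_e S th *m Hinv *m beta th + S th *m dHinv *m beta th
                      + S th *m Hinv *m 'D_e beta th)) *m y (Posz k - 1)
    + 'D_e S th *m Hinv *m y (Posz k)
    - S th *m Hinv *m 'D_e H th *m Hinv *m y (Posz k)).
  have -> : (fun t => a_pred (so t)) = (fun t => Tbar (Pf t) *m sa t +
      Bbar (Pf t) *m y (Posz k - 1) + S t *m invmx (H t) *m y (Posz k)).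
    by apply/funext => t; have [-> _ _ _ _] := SE t.
  apply: (is_derive_eq (is_deriveDf (is_deriveDf (is_derive_mulmx iTb ha)
     (is_derive_mulmx iBb (is_derive_cstf (y (Posz k - 1)) th e)))
     (is_derive_mulmx (is_derive_mulmx iS iHinv) (is_derive_cstf (y (Posz k)) th e)))).
  rewrite !mulmx0 !addr0 mulmxDl.
  have eH : S th *m dHinv *m y (Posz k) =
     - (S th *m Hinv *m 'D_e H th *m Hinv *m y (Posz k)).
    by rewrite /dHinv mulmxN mulNmx !mulmxA.
  by rewrite eH addrA.
set dTb := 'D_e T th - _ in iTb ia.
set dBb := 'D_e B th - _ in iBb ia.
set dap := (dTb *m sa th + _ + _ + _ - _) in ia.
have iA1 : is_derive th e (fun t => A1of (Pf t) (sU t))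
     (row_mx (dTb *m sU th + Tbar (Pf th) *m dU) ('D_e UQ th))^T.
  exact: (is_derive_tr (is_derive_row_mx (is_derive_mulmx iTb hU) iUQ)).
have iDA1 : is_derive th e (fun t => DA1of (Pf t) (sD t))
     (block_mx dD 0 0 ('D_e DQ th)).
  exact: (is_derive_block_mx hD (is_derive_cstf 0 th e) (is_derive_cstf 0 th e) iDQ).
have E1 : diffUD mwgs (A1of (Pf th) (sU th)) (DA1of (Pf th) (sD th))
     (row_mx (dTb *m sU th + Tbar (Pf th) *m dU) ('D_e UQ th))^T
     (block_mx dD 0 0 ('D_e DQ th)) =
     ('D_e (fun t => U_pred (so t)) th, 'D_e (fun t => D_pred (so t)) th).
  have h1 : forall t, posdiag (DA1of (Pf t) (sD t)) by move=> t; have [? _ _ _ _] := SI t.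
  have h2 : forall t, \rank (A1of (Pf t) (sU t)) = n by move=> t; have [_ ? _ _ _] := SI t.
  have h3 : forall t, (mwgs (A1of (Pf t) (sU t)) (DA1of (Pf t) (sD t))).1.2 = U_pred (so t).
    by move=> t; have [_ -> _ _ _] := SE t.
  have h4 : forall t, (mwgs (A1of (Pf t) (sU t)) (DA1of (Pf t) (sD t))).2 = D_pred (so t).
    by move=> t; have [_ -> _ _ _] := SE t.
  exact: (diffUD_correct spec h1 h2 h3 h4 iA1 iDA1 iUp iDp).
set DUp := 'D_e (fun t => U_pred (so t)) th in E1 iUp.
set DDp := 'D_e (fun t => D_pred (so t)) th in E1 iDp.
set DUf := 'D_e (fun t => U_filt (so t)) th in iUf.
set DDf := 'D_e (fun t => D_filt (so t)) th in iDf.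
set DK := 'D_e (fun t => K_u (so t)) th in iK.
set DURe := 'D_e (fun t => U_Re (so t)) th in iURe.
set DDRe := 'D_e (fun t => D_Re (so t)) th in iDRe.
have iA2 : is_derive th e (fun t => A2of (Pf t) (U_pred (so t)))
     (block_mx DUp 0 ('D_e Z th *m U_pred (so th) + Z th *m DUp) ('D_e UH th))^T.
  exact: (is_derive_tr (is_derive_block_mx iUp (is_derive_cstf 0 th e)
            (is_derive_mulmx iZ iUp) iUH)).
have iDA2 : is_derive th e (fun t => DA2of (Pf t) (D_pred (so t)))
     (block_mx DDp 0 0 ('D_e DH th)).
  exact: (is_derive_block_mx iDp (is_derive_cstf 0 th e) (is_derive_cstf 0 th e) iDH).
have iR2 := is_derive_block_mx iUf iK (is_derive_cstf 0 th e) iURe.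
have iDR2 := is_derive_block_mx iDf (is_derive_cstf 0 th e) (is_derive_cstf 0 th e) iDRe.
have E2 : diffUD mwgs (A2of (Pf th) (U_pred (so th))) (DA2of (Pf th) (D_pred (so th)))
     (block_mx DUp 0 ('D_e Z th *m U_pred (so th) + Z th *m DUp) ('D_e UH th))^T
     (block_mx DDp 0 0 ('D_e DH th)) =
     (block_mx DUf DK 0 DURe, block_mx DDf 0 0 DDRe).
  have h1 : forall t, posdiag (DA2of (Pf t) (D_pred (so t))).
    by move=> t; have [_ _ _ _ [? _ _ _ _]] := SI t.
  have h2 : forall t, \rank (A2of (Pf t) (U_pred (so t))) = (n + m)%N.
    by move=> t; have [_ _ _ _ [_ ? _ _ _]] := SI t.
  have h3 : forall t, (mwgs (A2of (Pf t) (U_pred (so t))) (DA2of (Pf t) (D_pred (so t)))).1.2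
     = block_mx (U_filt (so t)) (K_u (so t)) 0 (U_Re (so t)).
    by move=> t; have [_ _ _ _ [_ _ -> _ _]] := SI t.
  have h4 : forall t, (mwgs (A2of (Pf t) (U_pred (so t))) (DA2of (Pf t) (D_pred (so t)))).2
     = block_mx (D_filt (so t)) 0 0 (D_Re (so t)).
    by move=> t; have [_ _ _ _ [_ _ _ -> _]] := SI t.
  exact: (diffUD_correct spec h1 h2 h3 h4 iA2 iDA2 iR2 iDR2).
have Ed2 := dstepE (P := Pf th) (dP := dPf th i) (k:=k) (a := sa th) (U := sU th) (D := sD th) da (dU := dU) (dD := dD) E1 E2.
rewrite Ed2.
cbn [d_a_pred d_U_pred d_D_pred d_U_filt d_D_filt d_U_Re d_D_Re d_K_u d_ebar d_a_filt].
have uRe t : U_Re (so t) \in unitmx.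
  by have [_ _ _ _ [_ _ _ _ [_ _ ?]]] := SI t; exact: unit_upper_unit.
have fe : (fun t => ebar (so t)) = (fun t => invmx (U_Re (so t)) *m
    (y (Posz k.+1) - Z t *m a_pred (so t) - beta t *m y (Posz k))).
  by apply/funext => t; have [_ _ _ Ee [-> _]] := SE t; rewrite Ee.
have iebar0 := is_derive_mulmx (is_derive_invmx uRe iURe)
  (is_deriveBf (is_deriveBf (is_derive_cstf (y (Posz k.+1)) th e) (is_derive_mulmx iZ ia))
     (is_derive_mulmx ibeta (is_derive_cstf (y (Posz k)) th e))).
rewrite -fe in iebar0.
have Ee : e_inn (so th) = y (Posz k.+1) - Z th *m a_pred (so th) - beta th *m y (Posz k).
  by have [_ _ _ -> _] := SE th.
split; split.
- exact: ia.
- exact: iUp.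
- exact: iDp.
- by rewrite block_mxKul.
- by rewrite block_mxKul.
- by rewrite block_mxKdr.
- by rewrite block_mxKdr.
- by rewrite block_mxKur.
- apply: (is_derive_eq iebar0).
  rewrite block_mxKdr -Ee mulNmx mulmx0 addr0 sub0r -opprD mulmxN.
  by rewrite /dap.
- have fa : (fun t => a_filt (so t)) = (fun t => a_pred (so t) + K_u (so t) *m ebar (so t)).
    by apply/funext => t; have [_ _ _ _ [_ ->]] := SE t.
  rewrite fa; apply: (is_derive_eq (is_deriveDf ia (is_derive_mulmx iK iebar0))).
  rewrite block_mxKur addrA; congr (_ + _ + _ *m _).
  rewrite -Ee mulNmx mulmx0 addr0 sub0r -opprD mulmxN.
  by rewrite block_mxKdr /dap.
Qed.


Lemma state_deriv k : alg2a_differentiable mwgs Pf y N -> (k <= N)%N ->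
  [/\ is_derive th e (fun t => (alg2a_state mwgs (Pf t) y k).1.1)
        (alg2b_state mwgs (Pf th) (dPf th i) y k).1.1,
      is_derive th e (fun t => (alg2a_state mwgs (Pf t) y k).1.2)
        (alg2b_state mwgs (Pf th) (dPf th i) y k).1.2 &
      is_derive th e (fun t => (alg2a_state mwgs (Pf t) y k).2)
        (alg2b_state mwgs (Pf th) (dPf th i) y k).2].
Proof.
move=> hd; elim: k => [|k IH] hk.
  split; [exact: dfun e (dalpha0 th) | exact: dfun e (dUPi0 th) | exact: dfun e (dDPi0 th)].
have [h1 h2 h3] := IH (ltnW hk).
have [[_ _ _ hUf hDf] [_ _ _ _ haf]] := step_main hd hk h1 h2 h3.
by split.
Qed.

Lemma final k : alg2a_differentiable mwgs Pf y N -> (k < N)%N ->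
  let a := fun th' => alg2a mwgs (Pf th') y k in
  let d := alg2b mwgs (Pf th) (dPf th i) y k in
    [/\ is_derive th e (fun th' => a_pred (a th')) (d_a_pred d),
            is_derive th e (fun th' => U_pred (a th')) (d_U_pred d),
            is_derive th e (fun th' => D_pred (a th')) (d_D_pred d),
            is_derive th e (fun th' => U_filt (a th')) (d_U_filt d)
          & is_derive th e (fun th' => D_filt (a th')) (d_D_filt d)] /\
        [/\ is_derive th e (fun th' => U_Re (a th')) (d_U_Re d),
            is_derive th e (fun th' => D_Re (a th')) (d_D_Re d),
            is_derive th e (fun th' => K_u (a th')) (d_K_u d),
            is_derive th e (fun th' => ebar (a th')) (d_ebar d)
          & is_derive th e (fun th' => a_filt (a th')) (d_a_filt d)].
Proof.
move=> hd hk; have [h1 h2 h3] := state_deriv hd (ltnW hk).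
exact: step_main.
Qed.

End Main.

Unset Implicit Arguments.

Theorem proposition3 (R : realType) (n m p N : nat)
    (T : 'rV[R]_p -> 'M[R]_n) (B : 'rV[R]_p -> 'M[R]_(n, m))
    (Z : 'rV[R]_p -> 'M[R]_(m, n)) (beta : 'rV[R]_p -> 'M[R]_m)
    (Q : 'rV[R]_p -> 'M[R]_n) (S : 'rV[R]_p -> 'M[R]_(n, m))
    (H : 'rV[R]_p -> 'M[R]_m)
    (alpha0 : 'rV[R]_p -> 'cV[R]_n) (Pi0 : 'rV[R]_p -> 'M[R]_n)
    (UPi0 DPi0 : 'rV[R]_p -> 'M[R]_n) (UH DH : 'rV[R]_p -> 'M[R]_m)
    (UQ DQ : 'rV[R]_p -> 'M[R]_n)
    (y : int -> 'cV[R]_m) (mwgs : mwgs_fun R) :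
  MWGS_spec mwgs ->
  (forall th, psd (block_mx (Q th) (S th) (S th)^T (H th))) ->
  (forall th, posdef (Pi0 th)) ->
  (forall th, posdef (H th)) ->
  (forall th, UDU (UPi0 th) (DPi0 th) (Pi0 th)) ->
  (forall th, UDU (UH th) (DH th) (H th)) ->
  (forall th, UDU (UQ th) (DQ th) (Qbar (Q th) (S th) (H th))) ->
  (forall th, [/\ differentiable T th, differentiable B th, differentiable Z th,
                  differentiable beta th & differentiable Q th]) ->
  (forall th, [/\ differentiable S th, differentiable H th,
                  differentiable alpha0 th & differentiable Pi0 th]) ->
  (forall th, [/\ differentiable UPi0 th, differentiable DPi0 th,
                  differentiable UH th & differentiable DH th]) ->
  (forall th, differentiable UQ th /\ differentiable DQ th) ->
  let Pf := params_at T B Z beta S H alpha0 UPi0 DPi0 UH DH UQ DQ in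
  let dPf := dparams_at T B Z beta S H alpha0 UPi0 DPi0 UH DH UQ DQ in
  alg2a_differentiable mwgs Pf y N ->
  forall (th : 'rV[R]_p) (i : 'I_p) (k : nat), (k < N)%N ->
    let a := fun th' => alg2a mwgs (Pf th') y k in
    let d := alg2b mwgs (Pf th) (dPf th i) y k in
    let e := unitdir R i in
    [/\ is_derive th e (fun th' => a_pred (a th')) (d_a_pred d),
            is_derive th e (fun th' => U_pred (a th')) (d_U_pred d),
            is_derive th e (fun th' => D_pred (a th')) (d_D_pred d),
            is_derive th e (fun th' => U_filt (a th')) (d_U_filt d)
          & is_derive th e (fun th' => D_filt (a th')) (d_D_filt d)] /\
        [/\ is_derive th e (fun th' => U_Re (a th')) (d_U_Re d),
            is_derive th e (fun th' => D_Re (a th')) (d_D_Re d),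
            is_derive th e (fun th' => K_u (a th')) (d_K_u d),
            is_derive th e (fun th' => ebar (a th')) (d_ebar d)
          & is_derive th e (fun th' => a_filt (a th')) (d_a_filt d)].
Proof.
move=> spec _ _ _ hPi hH hQ d1 d2 d3 d4 Pf dPf hd th i k hk a d e.
move: hd hk; apply: (final spec hPi hH hQ).
all: try by move=> t; case: (d1 t); case: (d2 t); case: (d3 t); case: (d4 t).

Qed.
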